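(* Let $G=(V,E)$ be a control flow graph and $p$ a predicate node. If $p$ has at most one successor in $A_p$, then there are no nodes $a,b$ that are DOD on $p$.
   Context: A control flow graph (CFG) is a finite directed graph $G=(V,E)$ in which every node has at most two outgoing edges; nodes with exactly two outgoing edges are predicate nodes. A path from $n_1$ is a nonempty finite or infinite sequence $n_1n_2\ldots$ of nodes with each adjacent pair an edge; it is maximal if it is infinite or its last node has no successor. $V_p$ is the set of nodes occurring on all maximal paths from $p$ in $G$. For $V'\subseteq V$, a $V'$-interval from $x$ to $y$ is a finite path $n_1\ldots n_k$ in $G$ with $k\ge 2$, $n_1=x\in V'$, $n_k=y\in V'$, and $n_i\notin V'$ for $1<i<k$. $A_p$ is the directed graph with node set $V_p$ and an edge $(x,y)$ iff there is a $V_p$-interval from $x$ to $y$ in $G$. For three distinct nodes $p,a,b$ with $p$ a predicate node with successors $s_1,s_2$, the nodes $a,b$ are DOD (decisive order-dependent) on $p$ if all maximal paths from $p$ contain both $a$ and $b$, all maximal paths from $s_1$ contain $a$ before any occurrence of $b$, and all maximal paths from $s_2$ contain $b$ before any occurrence of $a$. *)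

(* Defs.v *)
From mathcomp Require Import all_boot.
Set Implicit Arguments. Unset Strict Implicit. Unset Printing Implicit Defensive.

Section CFG.
Variables (T : finType) (e : rel T).

Definition succs (x : T) : {set T} := [set y | e x y].

Definition is_cfg : Prop := forall x : T, #|succs x| <= 2.

Definition predicate_node (x : T) : Prop := #|succs x| = 2.

Definition fin_maxpath (n : T) (s : seq T) : Prop :=
  path e n s /\ forall y, ~~ e (last n s) y.

(* An infinite path from n (infinite paths are always maximal). *)
Definition inf_path (n : T) (f : nat -> T) : Prop :=
  f 0 = n /\ forall i, e (f i) (f i.+1).

Definition on_all_maxpaths (n v : T) : Prop :=
  (forall s, fin_maxpath n s -> v \in n :: s) /\
  (forall f, inf_path n f -> exists i, f i = v).

Definition Vp (p : T) (v : T) : Prop := on_all_maxpaths p v.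

(* There is a V_p-interval from x to y: a finite path x :: t ++ [:: y]
   (at least two nodes), x, y in V_p and all inner nodes outside V_p. *)
Definition Vp_interval (p x y : T) : Prop :=
  Vp p x /\ Vp p y /\
  exists t : seq T, path e x (rcons t y) /\ (forall z, z \in t -> ~ Vp p z).

Definition Ap_edge (p x y : T) : Prop := Vp_interval p x y.

Definition before_on_all_maxpaths (n a b : T) : Prop :=
  (forall s, fin_maxpath n s ->
     exists i, i < size (n :: s) /\ nth n (n :: s) i = a /\
               forall j, j <= i -> nth n (n :: s) j != b) /\
  (forall f, inf_path n f ->
     exists i, f i = a /\ forall j, j <= i -> f j <> b).

Definition DOD (p a b : T) : Prop :=
  [/\ p != a, p != b, a != b & predicate_node p] /\
  exists s1 s2 : T,
    s1 != s2 /\ e p s1 /\ e p s2 /\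
    on_all_maxpaths p a /\ on_all_maxpaths p b /\
    before_on_all_maxpaths s1 a b /\
    before_on_all_maxpaths s2 b a.

End CFG.

(* Main.v *)
Require Import Defs.
From mathcomp Require Import all_boot.
From mathcomp Require Import zify.
From Stdlib Require Import Classical.

Set Implicit Arguments.
Section Aux.
Variables (T : finType) (e : rel T).

Definition valid (len : option nat) i := if len is Some L then i < L else true.
Definition walk n (g : nat -> T) len :=
  [/\ g 0 = n, forall i, valid len i.+1 -> e (g i) (g i.+1) &
      if len is Some L then 0 < L /\ forall y, ~~ e (g L.-1) y else True].

Lemma valid_le len i j : j <= i -> valid len i -> valid len j.
Proof. case: len => //= L; exact: leq_ltn_trans. Qed.

Lemma path_iota x (h : nat -> T) j m : (0 < m -> e x (h j)) ->
  (forall i, j <= i -> i.+1 < j + m -> e (h i) (h i.+1)) ->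
  path e x (map h (iota j m)).
Proof.
elim: m x j => [//|m IH] x j H1 H2 /=.
rewrite H1 //=. apply: IH => [Hm|i Hi1 Hi2].
  apply: H2 => //; lia.
apply: H2; lia.
Qed.

Lemma fin_walk n g L : walk n g (Some L) ->
  fin_maxpath e n (map g (iota 1 L.-1)) /\
  (forall i, i < L -> nth n (n :: map g (iota 1 L.-1)) i = g i) /\ 0 < L.
Proof.
case=> g0 He [L0 Hend].
have Hn : forall i, i < L -> nth n (n :: map g (iota 1 L.-1)) i = g i.
  case=> [|i] Hi /=; first by rewrite g0.
  rewrite (nth_map 0) ?size_iota; last lia.
  by rewrite nth_iota; [rewrite add1n | lia].
split=> //. split.
  apply: path_iota => [Hm|i Hi1 Hi2].
    rewrite -g0; apply: He => /=; lia.
  apply: He => /=; lia.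
move=> y. rewrite (last_nth n) Hn size_map size_iota //; lia.
Qed.

Lemma walk_on n g len v : walk n g len -> on_all_maxpaths e n v ->
  exists i, valid len i /\ g i = v.
Proof.
case: len => [L|] Hw [Hf Hi].
  have [Hfm [Hn L0]] := fin_walk Hw.
  have := Hf _ Hfm. move/(nthP n) => [i Hi' <-].
  rewrite /= size_map size_iota in Hi'.
  exists i; split; first by rewrite /=; lia.
  by rewrite Hn //; lia.
case: Hw => g0 He _.
have [i Hi'] := Hi g (conj g0 (fun i => He i isT)). by exists i.
Qed.

Lemma walk_before n g len a b : walk n g len -> before_on_all_maxpaths e n a b ->
  exists i, valid len i /\ g i = a /\ forall j, j <= i -> g j <> b.
Proof.
case: len => [L|] Hw [Hf Hi].
  have [Hfm [Hn L0]] := fin_walk Hw.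
  have [i [Hi' [Ha Hb]]] := Hf _ Hfm.
  rewrite /= size_map size_iota in Hi'.
  exists i; split; first by rewrite /=; lia.
  split; first by rewrite -Hn //; lia.
  move=> j Hj. rewrite -Hn; last lia. by apply/eqP; apply: Hb.
case: Hw => g0 He _.
have [i Hi'] := Hi g (conj g0 (fun i => He i isT)). by exists i.
Qed.

Lemma walk_exists n : exists g len, walk n g len.
Proof.
pose h x := odflt x [pick y | e x y]. pose g i := iter i h n.
have hs : forall x, (exists y, e x y) -> e x (h x).
  move=> x [y Hy]; rewrite /h; case: pickP => [z Hz|H] //=.
  by have := H y; rewrite /= Hy.
case: (classic (exists i, [forall y, ~~ e (g i) y])) => [Hex|Hno].
  case: (@ex_minnP (fun i => [forall y, ~~ e (g i) y]) Hex) => k Hk Hmin.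
  exists g, (Some k.+1). split => //=.
    move=> i Hi. apply: hs.
    have : ~~ [forall y, ~~ e (g i) y].
      apply/negP => Hf. have := Hmin _ Hf. lia.
    move/forallPn => [y]; rewrite negbK => Hy. by exists y.
  split => // y. by move/forallP: Hk; apply.
exists g, None. split => // i _. apply: hs.
apply: NNPP => Hn; apply: Hno; exists i; apply/forallP => y; apply/negP => Hy.
apply: Hn; by exists y.
Qed.

Lemma walk_cat (h : nat -> T) k y g len :
  (forall i, i < k -> e (h i) (h i.+1)) -> h k = y -> walk y g len ->
  walk (h 0) (fun i => if i < k then h i else g (i - k)) (omap (addn k) len).
Proof.
move=> Hh Hk [g0 He Hend]. split.
- case: k Hh Hk => [|k] _ Hk //=. by rewrite g0 Hk.
- move=> i Hv /=. have [Hik|Hik] := ltnP i k.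
    have [Hik'|Hik'] := ltnP i.+1 k.
      exact: Hh.
    have Ek : k = i.+1 by lia.
    subst k. rewrite subnn g0 -Hk. exact: Hh.
  have H1 : (i.+1 < k) = false by apply/negbTE; rewrite -leqNgt; lia.
  have H2 : (i < k) = false by apply/negbTE; rewrite -leqNgt.
  rewrite H1 subSn //. apply: He. case: len Hv {Hend} => //= L. lia.
- case: len He Hend => [L _ [L0 HL]|] //=. split; first lia.
  move=> z. have H1 : ((k + L).-1 < k) = false by apply/negbTE; rewrite -leqNgt; lia.
  rewrite H1. have -> : (k + L).-1 - k = L.-1 by lia. exact: HL.
Qed.

Lemma minimal (P : nat -> Prop) n : P n -> exists m, P m /\ forall j, j < m -> ~ P j.
Proof.
move=> Pn. apply: NNPP => H.
have : forall k j, j <= k -> ~ P j.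
  elim=> [|k IH] j Hj Pj.
    apply: H; exists j; split=> // i Hi; exfalso; lia.
  case: (leqP j k) => Hjk; first exact: IH Hjk Pj.
  apply: H; exists j; split=> // i Hi; apply: IH; lia.
by move/(_ n n (leqnn n)).
Qed.

Lemma Vp_pp p : Vp e p p.
Proof. split; [move=> s _; exact: mem_head | move=> f [f0 _]; by exists 0]. Qed.

Lemma step1 p a s : e p s -> p != a -> Vp e p a ->
  exists (h : nat -> T) k, [/\ h 0 = s, forall i, i < k -> e (h i) (h i.+1),
     Ap_edge e p p (h k) & forall i, i < k -> ~ Vp e p (h i)].
Proof.
move=> Hps Hpa Ha.
have [r [len Hr]] := walk_exists s.
pose h0 := fun i => if i == 0 then p else s.
have Hh : forall i, i < 1 -> e (h0 i) (h0 i.+1) by case.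
have HW := @walk_cat h0 1 s r len Hh erefl Hr.
set G := (fun i => if i < 1 then h0 i else r (i - 1)) in HW.
set len' := omap (addn 1) len in HW.
have [i [Hvi Hgi]] := walk_on HW Ha.
have i0 : i != 0.
  apply/negP => /eqP Ei; subst i. by move: Hpa; rewrite -Hgi eqxx.
pose P n := valid len' n.+1 /\ Vp e p (G n.+1).
have [k0 [[Pk1 Pk2] Hmin]] : exists m, P m /\ forall j, j < m -> ~ P j.
  apply: (@minimal P i.-1). rewrite /P prednK ?lt0n //. by rewrite Hgi.
have Hedge : forall j, j < k0 -> e (G j.+1) (G j.+2).
  move=> j Hj. case: HW => _ He _. apply: He. apply: valid_le Pk1; lia.
have Hnv : forall j, j < k0 -> ~ Vp e p (G j.+1).
  move=> j Hj HV. apply: (Hmin j Hj). split=> //. apply: valid_le Pk1; lia.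
exists (fun i => G i.+1), k0. split => //.
- rewrite /G /=. by case: Hr.
- split; first exact: Vp_pp. split; first exact: Pk2.
  exists (map (fun i => G i.+1) (iota 0 k0)). split.
    have -> : rcons [seq G i.+1 | i <- iota 0 k0] (G k0.+1) =
              [seq G i.+1 | i <- iota 0 k0.+1].
      by rewrite -[in RHS]addn1 iotaD map_cat /= cats1 add0n.
    apply: path_iota => [_|j _ Hj]; first (rewrite /G /= /h0; idtac; case: Hr => -> _ _ //).
    apply: Hedge; lia.
  move=> z /mapP [j]; rewrite mem_iota => /andP [_ Hj] ->.
  apply: Hnv; lia.
Qed.

End Aux.
Unset Implicit Arguments.

Theorem lemma4p5 (T : finType) (e : rel T) (p : T) :
  is_cfg e -> predicate_node e p ->
  (forall y1 y2 : T, Ap_edge e p p y1 -> Ap_edge e p p y2 -> y1 = y2) ->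
  ~ (exists a b : T, DOD e p a b).
Proof.
move=> Hcfg Hpn Huniq [a [b [[Hpa Hpb Hab _] [s1 [s2 [H12 [Hps1 [Hps2 [Ha [Hb [B1 B2]]]]]]]]]]].
have [h1 [k1 [h10 He1 Ap1 Nv1]]] := @step1 T e p a s1 Hps1 Hpa Ha.
have [h2 [k2 [h20 He2 Ap2 Nv2]]] := @step1 T e p b s2 Hps2 Hpb Hb.
have Ey := Huniq _ _ Ap1 Ap2.
have [sg [len Hs]] := @walk_exists T e (h1 k1).
have W1 := @walk_cat T e h1 k1 _ sg len He1 erefl Hs.
have W2 := @walk_cat T e h2 k2 _ sg len He2 (esym Ey) Hs.
rewrite h10 in W1. rewrite h20 in W2.
have [i [_ [Hia Hib]]] := @walk_before T e _ _ _ a b W1 B1.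
have [i' [_ [Hib' Hia']]] := @walk_before T e _ _ _ b a W2 B2.
have Hik : k1 <= i.
  rewrite leqNgt; apply/negP => Hik. rewrite /= Hik in Hia.
  by apply: (Nv1 i Hik); rewrite Hia.
have Hik' : k2 <= i'.
  rewrite leqNgt; apply/negP => Hk2. rewrite /= Hk2 in Hib'.
  by apply: (Nv2 i' Hk2); rewrite Hib'.
have Hsa : sg (i - k1) = a.
  by move: Hia => /=; rewrite ltnNge Hik.
have Hsb : sg (i' - k2) = b.
  by move: Hib' => /=; rewrite ltnNge Hik'.
case: (leqP (i - k1) (i' - k2)) => Hm.
  have := Hia' (i - k1 + k2). rewrite /= ltnNge leq_addl /= addnK.
  apply; [lia | exact: Hsa].
have := Hib (i' - k2 + k1). rewrite /= ltnNge leq_addl /= addnK.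
apply; [lia | exact: Hsb].
Qed.
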